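(* There is a constant $C>0$ such that the following holds. For a positive integer $l$, set $\epsilon=2^{-2l}$, $N=\lceil 5.34\ln(4l\cdot 2^{2l})\rceil$, and $n=2N(2^l-1)$ (the total number of uses of $U_\theta$). For every $\theta\in[0,1)$, let $\hat\theta$ be the estimate produced by the following procedure: for $k=1,\dots,l$ let $N_{x,k}\sim\mathrm{Bin}\big(N,(1+\cos(2\pi 2^{k-1}\theta))/2\big)$, $N_{y,k}\sim\mathrm{Bin}\big(N,(1+\sin(2\pi 2^{k-1}\theta))/2\big)$, all independent; $t_k=\frac{1}{2\pi}\big(\mathrm{atan2}(2N_{y,k}/N-1,2N_{x,k}/N-1)\big)_{\mathrm{mod}\,2\pi}$, $x(k)=(t_k-1/6)_{\mathrm{mod}\,1}$; $z(1)=x(1)$ and for $k=1,\dots,l-1$, with $d_k=(x(k+1)-2z(k))_{\mathrm{mod}\,1}$: $z(k+1)=2z(k)+d_k$ if $d_k\in[0,1/3)$, $2z(k)+1/3$ if $d_k\in[1/3,2/3)$, $2z(k)$ if $d_k\in[2/3,1)$; finally $\hat\theta=\big((z(l)+1/6)/2^{l-1}\big)_{\mathrm{mod}\,1}$. Then $$1-\mathbb{E}\big[F(U_{\hat\theta},U_\theta)\big]\le C\Big(\frac{\ln n}{n}\Big)^2 .$$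
   Context: $U_\theta=\mathrm{diag}(1,e^{i2\pi\theta})$ for $\theta\in[0,1)$, and the fidelity is $F(U_{\hat\theta},U_\theta)=|\mathrm{tr}(U_{\hat\theta}^{-1}U_\theta)|^2/4$. The binomial counts model, at stage $k$, $N$ measurements each with the POVMs $\{|\psi_x\rangle\langle\psi_x|,\mathbb{I}-|\psi_x\rangle\langle\psi_x|\}$ and $\{|\psi_y\rangle\langle\psi_y|,\mathbb{I}-|\psi_y\rangle\langle\psi_y|\}$ ($|\psi_x\rangle=(|0\rangle+|1\rangle)/\sqrt2$, $|\psi_y\rangle=(|0\rangle+i|1\rangle)/\sqrt2$) of $U_\theta^{2^{k-1}}|\psi_x\rangle$. $(a)_{\mathrm{mod}\,c}$ is the representative of $a$ in $[0,c)$; $\mathrm{atan2}$ is the polar angle (any fixed convention at $(0,0)$). The expectation is over the measurement outcomes; $C$ does not depend on $\theta$ or $l$. *)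

(* Defs.v *)
From Stdlib Require Import Reals Lra List.
Open Scope R_scope.

(* floor and ceiling; Int_part is the floor (Int_part x <= x < Int_part x + 1) *)
Definition rfloor (x : R) : Z := Int_part x.
Definition rceil (x : R) : Z := (- Int_part (- x))%Z.

Definition rmod (a c : R) : R := a - c * IZR (rfloor (a / c)).

(* polar angle of (x,y), values in (-PI, PI]; convention atan2 0 0 = 0 *)
Definition atan2 (y x : R) : R :=
  if Rlt_dec 0 x then atan (y / x)
  else if Rlt_dec x 0 then
    (if Rle_dec 0 y then atan (y / x) + PI else atan (y / x) - PI)
  else if Rlt_dec 0 y then PI / 2
  else if Rlt_dec y 0 then - (PI / 2)
  else 0.

(* Fidelity F(U_a,U_th) = |tr(U_a^{-1} U_th)|^2/4 with U_t = diag(1, e^{i 2 pi t}):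
   tr(U_a^{-1} U_th) = 1 + e^{i 2 pi (th - a)}; |.|^2 written via real/imag parts. *)
Definition fidelity (a th : R) : R :=
  ((1 + cos (2 * PI * (th - a))) ^ 2 + (sin (2 * PI * (th - a))) ^ 2) / 4.

Definition binpmf (N : nat) (p : R) (k : nat) : R :=
  Binomial.C N k * p ^ k * (1 - p) ^ (N - k).

Definition Nsamp (l : nat) : nat :=
  Z.to_nat (rceil (534 / 100 * ln (4 * INR l * 2 ^ (2 * l)))).
Definition nuses (l : nat) : nat := 2 * Nsamp l * (2 ^ l - 1).

Definition tval (N : nat) (nx ny : nat) : R :=
  rmod (atan2 (2 * INR ny / INR N - 1) (2 * INR nx / INR N - 1)) (2 * PI) / (2 * PI).
Definition xval (N : nat) (c : nat * nat) : R :=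
  rmod (tval N (fst c) (snd c) - 1 / 6) 1.

Definition zstep (z x : R) : R :=
  let d := rmod (x - 2 * z) 1 in
  if Rlt_dec d (1 / 3) then 2 * z + d
  else if Rlt_dec d (2 / 3) then 2 * z + 1 / 3
  else 2 * z.

(* estimate from the list of counts [(N_{x,1},N_{y,1}); ...; (N_{x,l},N_{y,l})] *)
Definition estimate (N l : nat) (cs : list (nat * nat)) : R :=
  let xs := map (xval N) cs in
  let zl := fold_left zstep (tl xs) (hd 0 xs) in
  rmod ((zl + 1 / 6) / 2 ^ (l - 1)) 1.

Fixpoint expect (N : nat) (phs : list R) (f : list (nat * nat) -> R) : R :=
  match phs with
  | nil => f nil
  | ph :: rest =>
      sum_f_R0 (fun nx =>
        sum_f_R0 (fun ny =>
          binpmf N ((1 + cos (2 * PI * ph)) / 2) nx *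
          binpmf N ((1 + sin (2 * PI * ph)) / 2) ny *
          expect N rest (fun tl => f ((nx, ny) :: tl))) N) N
  end.

Definition phases (l : nat) (th : R) : list R :=
  map (fun k => 2 ^ (k - 1) * th) (seq 1 l).

Definition expected_fidelity (l : nat) (th : R) : R :=
  expect (Nsamp l) (phases l th)
    (fun cs => fidelity (estimate (Nsamp l) l cs) th).

(* Main.v *)
Require Import Defs.
From Stdlib Require Import Reals Lra Lia List ZArith.
From Coquelicot Require Import Coquelicot.
Open Scope R_scope.

Lemma Dpos p x : 0 <= p <= 1 -> 0 < 1 - p + p * exp x.
Proof.
  intros Hp. pose proof (exp_pos x).
  destruct (Rle_dec 1 (exp x)). nra. nra.
Qed.

Lemma hoeff_lemma p lam : 0 <= p <= 1 -> 0 <= lam ->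
  1 - p + p * exp lam <= exp (lam * p + lam ^ 2 / 8).
Proof.
  intros Hp Hl.
  set (D := fun x => 1 - p + p * exp x).
  set (g1 := fun x => p + x / 4 - p * exp x / D x).
  set (g2 := fun x => 1/4 - p * exp x * (1 - p) / (D x)^2).
  set (g := fun x => x * p + x ^ 2 / 8 - ln (D x)).
  assert (HD : forall x, 0 < D x) by (intros; apply Dpos; auto).
  assert (d1 : forall x, is_derive g1 x (g2 x)).
  { intros x. unfold g1, g2, D. auto_derive.
    - specialize (HD x); unfold D in HD; lra.
    - specialize (HD x); unfold D in HD. field. lra. }
  assert (d0 : forall x, is_derive g x (g1 x)).
  { intros x. unfold g, g1, D. auto_derive.
    - specialize (HD x); unfold D in HD; lra.
    - specialize (HD x); unfold D in HD. field. lra. }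
  assert (g2p : forall x, 0 <= g2 x).
  { intros x. unfold g2. specialize (HD x). unfold D in *.
    pose proof (exp_pos x).
    assert (p * exp x * (1 - p) / (1 - p + p * exp x) ^ 2 <= 1/4).
    { apply Rmult_le_reg_r with ((1 - p + p * exp x) ^ 2). nra.
      unfold Rdiv. rewrite Rmult_assoc, Rinv_l by (apply pow_nonzero; lra).
      pose proof (pow2_ge_0 (p * exp x - (1 - p))). nra. }
    lra. }
  assert (g1p' : forall x, 0 <= x -> 0 <= g1 x).
  { intros x Hx. destruct (Req_dec x 0) as [->|Hne].
    - assert (E: g1 0 = 0) by (unfold g1, D; rewrite exp_0; field; lra). lra.
    - destruct (MVT_cor3 g1 g2 0 x) as [c [? [? Hc]]]. lra.
      intros; apply is_derive_Reals; auto.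
      rewrite Hc. assert (g1 0 = 0). { unfold g1, D. rewrite exp_0. field; lra. }
      specialize (g2p c). nra. }
  assert (gp : 0 <= g lam).
  { destruct (Req_dec lam 0) as [->|Hne].
    - unfold g, D. rewrite exp_0. replace (1 - p + p*1) with 1 by ring. rewrite ln_1. lra.
    - destruct (MVT_cor3 g g1 0 lam) as [c [? [? Hc]]]. lra.
      intros; apply is_derive_Reals; auto.
      rewrite Hc. assert (g 0 = 0). { unfold g, D. rewrite exp_0.
        replace (1 - p + p*1) with 1 by ring. rewrite ln_1. lra. }
      specialize (g1p' c H). nra. }
  unfold g in gp. fold (D lam).
  rewrite <- (exp_ln (D lam)) by auto.
  destruct (Rle_lt_or_eq_dec (ln (D lam)) (lam * p + lam ^ 2 / 8)) as [h|h]; [lra| left; apply exp_increasing; exact h| right; rewrite h; reflexivity].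
Qed.

Lemma exp_mult_INR x k : exp (x * INR k) = exp x ^ k.
Proof.
  induction k. simpl. rewrite Rmult_0_r, exp_0. ring.
  rewrite S_INR, Rmult_plus_distr_l, Rmult_1_r, exp_plus, IHk. simpl. ring.
Qed.

Lemma C_nonneg n k : 0 <= Binomial.C n k.
Proof.
  unfold Binomial.C. apply Rmult_le_pos. apply pos_INR.
  left. apply Rinv_0_lt_compat. apply Rmult_lt_0_compat; apply lt_0_INR, Factorial.lt_O_fact.
Qed.

Lemma pmf_nonneg N p k : 0 <= p <= 1 -> 0 <= binpmf N p k.
Proof.
  intros Hp. unfold binpmf. apply Rmult_le_pos. apply Rmult_le_pos. apply C_nonneg.
  apply pow_le; lra. apply pow_le; lra.
Qed.

Lemma pmf_sum N p : sum_f_R0 (binpmf N p) N = 1.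
Proof.
  unfold binpmf. rewrite <- binomial. replace (p + (1 - p)) with 1 by ring. apply pow1.
Qed.

Lemma pmf_mgf N p x : sum_f_R0 (fun k => binpmf N p k * exp (x * INR k)) N
  = (1 - p + p * exp x) ^ N.
Proof.
  replace (1 - p + p * exp x) with (p * exp x + (1 - p)) by ring.
  rewrite binomial. apply sum_eq. intros i _. unfold binpmf.
  rewrite exp_mult_INR, Rpow_mult_distr. ring.
Qed.

Lemma hoeff_lemma2 p lam : 0 <= p <= 1 -> 0 <= lam ->
  1 - p + p * exp (- lam) <= exp (- lam * p + lam ^ 2 / 8).
Proof.
  intros Hp Hl. pose proof (hoeff_lemma (1 - p) lam ltac:(lra) Hl).
  replace (- lam * p + lam ^ 2 / 8) with ((lam * (1 - p) + lam ^ 2 / 8) + - lam) by ring.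
  rewrite exp_plus.
  assert (Ee : exp lam * exp (- lam) = 1) by (rewrite <- exp_plus; replace (lam + - lam) with 0 by ring; apply exp_0).
  replace (1 - p + p * exp (- lam)) with ((1 - (1 - p) + (1 - p) * exp lam) * exp (-lam)).
  apply Rmult_le_compat_r. left; apply exp_pos. exact H.
  ring_simplify. rewrite Rmult_assoc, Ee. 
  pose proof (exp_pos lam). assert (exp (-lam) = / exp lam) by (apply Rmult_eq_reg_l with (exp lam); [rewrite Ee; field|]; lra).
  rewrite H1. field. lra.
Qed.

Definition ind (b : bool) : R := if b then 1 else 0.

Lemma tail N p t : (0 < N)%nat -> 0 <= p <= 1 -> 0 < t ->
  sum_f_R0 (fun k => binpmf N p k *
     (if Rle_dec (t ^ 2) ((INR k / INR N - p) ^ 2) then 1 else 0)) N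
  <= 2 * exp (- (2 * INR N * t ^ 2)).
Proof.
  intros HN Hp Ht. set (lam := 4 * t).
  assert (HNr : 0 < INR N) by (apply lt_0_INR; lia).
  set (e1 := fun k => exp (lam * INR k) * exp (- (lam * INR N * (p + t)))).
  set (e2 := fun k => exp (- lam * INR k) * exp (lam * INR N * (p - t))).
  apply Rle_trans with (sum_f_R0 (fun k => binpmf N p k * e1 k + binpmf N p k * e2 k) N).
  { apply sum_Rle. intros k _. rewrite <- Rmult_plus_distr_l.
    apply Rmult_le_compat_l. apply pmf_nonneg; auto.
    unfold e1, e2. rewrite <- !exp_plus.
    pose proof (exp_pos (lam * INR k + - (lam * INR N * (p + t)))).
    pose proof (exp_pos (- lam * INR k + lam * INR N * (p - t))).
    destruct (Rle_dec _ _) as [h|h]; [|lra].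
    assert (h2 : t <= INR k / INR N - p \/ INR k / INR N - p <= - t).
    { destruct (Rle_dec t (INR k / INR N - p)). auto. right. nra. }
    assert (INR k / INR N * INR N = INR k) by (field; lra).
    destruct h2 as [h2|h2].
    - assert (0 <= lam * INR k + - (lam * INR N * (p + t))).
      { unfold lam. assert (INR k >= INR N * (p + t)) by nra. nra. }

      assert (exp 0 <= exp (lam * INR k + - (lam * INR N * (p + t)))).
      { destruct H2 as [h3|h3]. left; apply exp_increasing; auto. rewrite h3; right; auto. }
      rewrite exp_0 in H3; lra.
    - assert (0 <= - lam * INR k + lam * INR N * (p - t)).
      { unfold lam. assert (INR k <= INR N * (p - t)) by nra. nra. }
      assert (exp 0 <= exp (- lam * INR k + lam * INR N * (p - t))).
      { destruct H2 as [h3|h3]. left; apply exp_increasing; auto. rewrite h3; right; auto. }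
      rewrite exp_0 in H3. lra. }
  rewrite plus_sum. unfold e1, e2.
  assert (S1 : sum_f_R0 (fun k => binpmf N p k * (exp (lam * INR k) * exp (- (lam * INR N * (p + t))))) N
     = (1 - p + p * exp lam) ^ N * exp (- (lam * INR N * (p + t)))).
  { rewrite <- pmf_mgf, (Rmult_comm (sum_f_R0 _ N)), scal_sum. apply sum_eq; intros; ring. }
  assert (S2 : sum_f_R0 (fun k => binpmf N p k * (exp (- lam * INR k) * exp (lam * INR N * (p - t)))) N
     = (1 - p + p * exp (- lam)) ^ N * exp (lam * INR N * (p - t))).
  { rewrite <- pmf_mgf, (Rmult_comm (sum_f_R0 _ N)), scal_sum. apply sum_eq; intros; ring. }
  rewrite S1, S2.
  assert (Hl : 0 <= lam) by (unfold lam; lra).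
  assert (B1 : (1 - p + p * exp lam) ^ N <= exp (INR N * (lam * p + lam ^ 2 / 8))).
  { rewrite (Rmult_comm (INR N)), exp_mult_INR. apply pow_incr. split. left; apply Dpos; auto.
    apply hoeff_lemma; auto. }
  assert (B2 : (1 - p + p * exp (- lam)) ^ N <= exp (INR N * (- lam * p + lam ^ 2 / 8))).
  { rewrite (Rmult_comm (INR N)), exp_mult_INR. apply pow_incr. split. left; apply Dpos; auto.
    apply hoeff_lemma2; auto. }
  pose proof (exp_pos (- (lam * INR N * (p + t)))).
  pose proof (exp_pos (lam * INR N * (p - t))).
  assert (E1 : exp (INR N * (lam * p + lam ^ 2 / 8)) * exp (- (lam * INR N * (p + t))) = exp (- (2 * INR N * t ^ 2))).
  { rewrite <- exp_plus. f_equal. unfold lam. field. }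
  assert (E2 : exp (INR N * (- lam * p + lam ^ 2 / 8)) * exp (lam * INR N * (p - t)) = exp (- (2 * INR N * t ^ 2))).
  { rewrite <- exp_plus. f_equal. unfold lam. field. }
  pose proof (Rmult_le_compat_r _ _ _ (Rlt_le _ _ H) B1).
  pose proof (Rmult_le_compat_r _ _ _ (Rlt_le _ _ H0) B2).
  lra.
Qed.

Definition px (ph : R) := (1 + cos (2 * PI * ph)) / 2.
Definition py (ph : R) := (1 + sin (2 * PI * ph)) / 2.
Lemma px_bnd ph : 0 <= px ph <= 1.
Proof. unfold px. pose proof (COS_bound (2*PI*ph)). lra. Qed.
Lemma py_bnd ph : 0 <= py ph <= 1.
Proof. unfold py. pose proof (SIN_bound (2*PI*ph)). lra. Qed.

Lemma dsum_sep (a b u v : nat -> R) c N :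
  sum_f_R0 (fun i => sum_f_R0 (fun j => a i * b j * (u i + v j + c)) N) N
  = sum_f_R0 (fun i => a i * u i) N * sum_f_R0 b N
    + sum_f_R0 a N * sum_f_R0 (fun j => b j * v j) N
    + sum_f_R0 a N * sum_f_R0 b N * c.
Proof.
  transitivity (sum_f_R0 (fun i => a i * u i * sum_f_R0 b N + a i * sum_f_R0 (fun j => b j * v j) N
     + a i * sum_f_R0 b N * c) N).
  - apply sum_eq. intros i _.
    rewrite (sum_eq _ (fun j => (b j * (a i * u i) + b j * v j * a i) + b j * (a i * c)))
      by (intros; ring).
    rewrite !plus_sum. rewrite <- !scal_sum. ring.
  - rewrite !plus_sum.
    rewrite <- (scal_sum (fun i => a i * u i) N (sum_f_R0 b N)).
    rewrite <- (scal_sum a N (sum_f_R0 (fun j => b j * v j) N)).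
    rewrite <- (scal_sum (fun i => a i * sum_f_R0 b N) N c).
    rewrite <- (scal_sum a N (sum_f_R0 b N)). ring.
Qed.

Lemma expect_add_const N phs : forall f c,
  expect N phs (fun cs => c + f cs) = c + expect N phs f.
Proof.
  induction phs as [|ph rest IH]; intros f c; simpl. reflexivity.
  rewrite (sum_eq _ (fun nx => sum_f_R0 (fun ny =>
     binpmf N (px ph) nx * binpmf N (py ph) ny * (0 + 0 + c) +
     binpmf N (px ph) nx * binpmf N (py ph) ny * expect N rest (fun tl => f ((nx, ny) :: tl))) N)).
  2:{ intros i _. apply sum_eq. intros j _. rewrite IH. unfold px, py. ring. }
  rewrite (sum_eq _ (fun nx => sum_f_R0 (fun ny =>
     binpmf N (px ph) nx * binpmf N (py ph) ny * (0 + 0 + c)) N +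
     sum_f_R0 (fun ny => binpmf N (px ph) nx * binpmf N (py ph) ny * expect N rest (fun tl => f ((nx, ny) :: tl))) N)).
  2:{ intros i _. apply plus_sum. }
  rewrite plus_sum. rewrite (dsum_sep (binpmf N (px ph)) (binpmf N (py ph)) (fun _ => 0) (fun _ => 0)).
  rewrite !pmf_sum. unfold px, py. 
  rewrite (sum_eq (fun i => binpmf N _ i * 0) (fun _ => 0)) by (intros; ring).
  rewrite (sum_eq (fun i => binpmf N _ i * 0) (fun _ => 0)) by (intros; ring).
  rewrite sum_cte. ring.
Qed.

Lemma expect_const N phs c : expect N phs (fun _ => c) = c.
Proof.
  induction phs as [|ph rest IH]; simpl. reflexivity.
  rewrite (sum_eq _ (fun nx => sum_f_R0 (fun ny =>
     binpmf N (px ph) nx * binpmf N (py ph) ny * (0 + 0 + c)) N)).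
  2:{ intros i _. apply sum_eq. intros j _. rewrite IH. unfold px, py. ring. }
  rewrite (dsum_sep (binpmf N (px ph)) (binpmf N (py ph)) (fun _ => 0) (fun _ => 0)).
  rewrite !pmf_sum.
  rewrite (sum_eq (fun i => binpmf N _ i * 0) (fun _ => 0)) by (intros; ring).
  rewrite (sum_eq (fun i => binpmf N _ i * 0) (fun _ => 0)) by (intros; ring).
  rewrite sum_cte. ring.
Qed.

Lemma expect_mono N phs : forall f g,
  (forall cs, length cs = length phs -> f cs <= g cs) ->
  expect N phs f <= expect N phs g.
Proof.
  induction phs as [|ph rest IH]; intros f g H; simpl. apply H; reflexivity.
  apply sum_Rle; intros i _. apply sum_Rle; intros j _.
  apply Rmult_le_compat_l.
  apply Rmult_le_pos; apply pmf_nonneg; [apply px_bnd|apply py_bnd].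
  apply IH. intros cs Hcs. apply H. simpl; lia.
Qed.

Lemma tail' N p : (0 < N)%nat -> 0 <= p <= 1 ->
  sum_f_R0 (fun k => binpmf N p k *
     (if Rle_dec (3/32) ((INR k / INR N - p) ^ 2) then 1 else 0)) N
  <= 2 * exp (- (2 * INR N * (3/32))).
Proof.
  intros HN Hp. assert (h : sqrt (3/32) ^ 2 = 3/32) by (simpl; rewrite Rmult_1_r; apply sqrt_sqrt; lra).
  rewrite <- h. apply tail; auto. apply sqrt_lt_R0. lra.
Qed.

Definition badx N ph (c : nat * nat) :=
  if Rle_dec (3/32) ((INR (fst c) / INR N - px ph) ^ 2) then 1 else 0.
Definition bady N ph (c : nat * nat) :=
  if Rle_dec (3/32) ((INR (snd c) / INR N - py ph) ^ 2) then 1 else 0.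
Fixpoint badsum N (phs : list R) (cs : list (nat * nat)) : R :=
  match phs, cs with
  | ph :: r, c :: t => badx N ph c + bady N ph c + badsum N r t
  | _, _ => 0
  end.

Lemma expect_badsum N phs : (0 < N)%nat ->
  expect N phs (badsum N phs) <= INR (length phs) * (4 * exp (- (2 * INR N * (3/32)))).
Proof.
  intros HN. induction phs as [|ph rest IH]; cbn [expect badsum length]. simpl; lra.
  rewrite (sum_eq _ (fun nx => sum_f_R0 (fun ny =>
     binpmf N (px ph) nx * binpmf N (py ph) ny *
     ((fun i => badx N ph (i, 0%nat)) nx + (fun j => bady N ph (0%nat, j)) ny + expect N rest (badsum N rest))) N)).
  2:{ intros i _. apply sum_eq. intros j _.
      rewrite (expect_add_const N rest (badsum N rest) (badx N ph (i, j) + bady N ph (i, j))).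
      unfold badx, bady, px, py. simpl. ring. }
  rewrite dsum_sep. rewrite !pmf_sum.
  pose proof (tail' N (px ph) HN (px_bnd ph)).
  pose proof (tail' N (py ph) HN (py_bnd ph)).
  unfold badx, bady. cbn [fst snd].
  rewrite S_INR. lra.
Qed.

Lemma cos_per_Z x m : cos (x + 2 * PI * IZR m) = cos x.
Proof.
  destruct (Z_le_gt_dec 0 m).
  - replace (IZR m) with (INR (Z.to_nat m)).
    2:{ rewrite INR_IZR_INZ, Z2Nat.id; auto. }
    replace (x + 2 * PI * INR (Z.to_nat m)) with (x + 2 * INR (Z.to_nat m) * PI) by ring.
    apply cos_period.
  - replace (IZR m) with (- INR (Z.to_nat (- m))).
    2:{ rewrite INR_IZR_INZ, Z2Nat.id by lia. rewrite opp_IZR. ring. }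
    rewrite <- (cos_period (x + 2 * PI * - INR (Z.to_nat (- m))) (Z.to_nat (-m))).
    f_equal. ring.
Qed.

Lemma sin_per_Z x m : sin (x + 2 * PI * IZR m) = sin x.
Proof.
  rewrite !sin_cos. replace (PI / 2 + (x + 2 * PI * IZR m)) with ((PI/2 + x) + 2 * PI * IZR m) by ring.
  rewrite cos_per_Z. reflexivity.
Qed.

Lemma rmod1 a : rmod a 1 = a - IZR (Int_part a) /\ 0 <= rmod a 1 < 1.
Proof.
  unfold rmod, rfloor. replace (a / 1) with a by field.
  pose proof (base_Int_part a). split. ring. lra.
Qed.

Lemma atan2_polar a b : a <> 0 \/ b <> 0 ->
  sqrt (a * a + b * b) * cos (atan2 b a) = a /\ sqrt (a * a + b * b) * sin (atan2 b a) = b.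
Proof.
  intros Hab. unfold atan2.
  assert (key : forall a, a <> 0 -> sqrt (a * a + b * b) = Rabs a * sqrt (1 + (b / a)²)).
  { intros a0 H0. rewrite <- sqrt_Rsqr_abs. unfold Rsqr. rewrite <- sqrt_mult.
    f_equal. field. auto. apply Rle_0_sqr. apply Rplus_le_le_0_compat. lra. apply Rle_0_sqr. }
  assert (Sp : forall u, 0 < sqrt (1 + u²)).
  { intros. apply sqrt_lt_R0. pose proof (Rle_0_sqr u). lra. }
  destruct (Rlt_dec 0 a).
  - rewrite key by lra. rewrite Rabs_right by lra. rewrite cos_atan, sin_atan.
    specialize (Sp (b / a)). split; field; lra.
  - destruct (Rlt_dec a 0).
    + rewrite key by lra. rewrite Rabs_left by lra. specialize (Sp (b / a)).
      destruct (Rle_dec 0 b).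
      * rewrite neg_cos, neg_sin, cos_atan, sin_atan. split; field; lra.
      * replace (atan (b / a) - PI) with ((atan (b / a) + PI) + 2 * PI * IZR (-1)) by (simpl; ring).
        rewrite cos_per_Z, sin_per_Z.
        rewrite neg_cos, neg_sin, cos_atan, sin_atan. split; field; lra.
    + assert (a = 0) by lra. subst a.
      replace (0 * 0 + b * b) with (b²) by (unfold Rsqr; ring). rewrite sqrt_Rsqr_abs.
      destruct (Rlt_dec 0 b).
      * rewrite cos_PI2, sin_PI2, Rabs_right by lra. split; ring.
      * destruct (Rlt_dec b 0).
        -- rewrite cos_neg, sin_neg, cos_PI2, sin_PI2, Rabs_left by lra. split; ring.
        -- exfalso. destruct Hab; lra.
Qed.

Definition near (x y : R) := exists d m, Rabs d < 1/6 /\ x = y + d + IZR m.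

Lemma cos_gt_half_small d : -1/2 <= d <= 1/2 -> cos (2 * PI * d) > 1/2 -> Rabs d < 1/6.
Proof.
  intros Hd Hc. pose proof PI_RGT_0 as Hpi.
  assert (Hc' : cos (2 * PI * Rabs d) > 1/2).
  { unfold Rabs; destruct (Rcase_abs d). rewrite <- cos_neg. replace (- (2 * PI * - d)) with (2*PI*d) by ring. auto. auto. }
  destruct (Rlt_dec (Rabs d) (1/6)); auto. exfalso.
  assert (Ha : 1/6 <= Rabs d <= 1/2).
  { split. lra. unfold Rabs; destruct (Rcase_abs d); lra. }
  destruct (Req_dec (Rabs d) (1/6)) as [E|E].
  - rewrite E in Hc'. replace (2 * PI * (1/6)) with (PI/3) in Hc' by field. rewrite cos_PI3 in Hc'. lra.
  - assert (cos (2 * PI * Rabs d) < cos (PI / 3)).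
    { apply cos_decreasing_1; nra. }
    rewrite cos_PI3 in H. lra.
Qed.

Lemma stage_near N ph c : (0 < N)%nat ->
  (INR (fst c) / INR N - px ph) ^ 2 < 3/32 ->
  (INR (snd c) / INR N - py ph) ^ 2 < 3/32 ->
  near (xval N c) (ph - 1/6).
Proof.
  intros HN Hx Hy. destruct c as [nx ny]. simpl in Hx, Hy.
  assert (HNr : 0 < INR N) by (apply lt_0_INR; lia).
  pose proof PI_RGT_0 as Hpi.
  set (a := 2 * INR nx / INR N - 1). set (b := 2 * INR ny / INR N - 1).
  set (al := 2 * PI * ph).
  assert (Ea : (a - cos al) ^ 2 < 3/8).
  { replace (a - cos al) with (2 * (INR nx / INR N - px ph)) by (unfold a, al, px; field; lra). nra. }
  assert (Eb : (b - sin al) ^ 2 < 3/8).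
  { replace (b - sin al) with (2 * (INR ny / INR N - py ph)) by (unfold b, al, py; field; lra). nra. }
  pose proof (sin2_cos2 al) as SC. unfold Rsqr in SC.
  assert (Hab : a <> 0 \/ b <> 0).
  { destruct (Req_dec a 0); destruct (Req_dec b 0); auto. exfalso. rewrite H, H0 in *. nra. }
  destruct (atan2_polar a b Hab) as [Pa Pb].
  set (g := atan2 b a) in *. set (r := sqrt (a * a + b * b)) in *.
  assert (Hr2 : r * r = a * a + b * b) by (apply sqrt_sqrt; nra).
  assert (Hr : 0 < r). { unfold r. apply sqrt_lt_R0. destruct Hab; nra. }
  assert (Hcos : cos (g - al) > 1/2).
  { rewrite cos_minus.
    assert (a * cos al + b * sin al = r * (cos g * cos al + sin g * sin al)) by (rewrite <- Pa, <- Pb at 1; ring).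
    assert (2 * (a * cos al + b * sin al) > r * r + 1/4) by nra.
    pose proof (pow2_ge_0 (r - 1/2)). nra. }
  unfold xval, tval. simpl fst; simpl snd. fold a b. fold g.
  destruct (rmod1 (rmod g (2 * PI) / (2 * PI) - 1 / 6)) as [X1 _]. rewrite X1.
  unfold rmod at 1, rfloor.
  set (f1 := Int_part (g / (2 * PI))).
  set (w := g / (2 * PI) - ph).
  set (m := Int_part (w + 1/2)).
  pose proof (base_Int_part (w + 1/2)) as Hm. fold m in Hm.
  exists (w - IZR m), (m - f1 - Int_part ((g - 2 * PI * IZR f1) / (2 * PI) - 1 / 6))%Z.
  split.
  - apply cos_gt_half_small. lra.
    replace (2 * PI * (w - IZR m)) with ((g - al) + 2 * PI * IZR (- m)) by (unfold w, al; rewrite opp_IZR; field; lra).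
    rewrite cos_per_Z. auto.
  - rewrite !minus_IZR. unfold w, rmod, rfloor. fold f1. field. lra.
Qed.

Lemma int01 j : -1 < IZR j -> IZR j < 2 -> j = 0%Z \/ j = 1%Z.
Proof.
  intros H1 H2. apply lt_IZR in H1. apply lt_IZR in H2. lia.
Qed.

Lemma pow2_succ p K : IZR (2 ^ Z.of_nat (S p) * K) = 2 * IZR (2 ^ Z.of_nat p * K).
Proof.
  rewrite Nat2Z.inj_succ, Z.pow_succ_r by lia. rewrite !mult_IZR. ring.
Qed.

Lemma zstep_inv psi z x e K p :
  near x (2 * psi - 1/6) -> Rabs e < 1/6 ->
  z = psi - 1/6 + e + IZR (2 ^ Z.of_nat p * K) ->
  exists e1, Rabs e1 < 1/6 /\
    zstep z x = 2 * psi - 1/6 + e1 + IZR (2 ^ Z.of_nat (S p) * K).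
Proof.
  intros [dl [m [Hdl Hx]]] He Hz.
  apply Rabs_def2 in Hdl. apply Rabs_def2 in He.
  rewrite pow2_succ.
  set (u := dl - 2 * e).
  assert (Hxz : x - 2 * z = 1/6 + u + IZR (m - 2 * (2 ^ Z.of_nat p * K))).
  { rewrite Hx, Hz, minus_IZR, !mult_IZR. unfold u. field. }
  unfold zstep.
  destruct (rmod1 (x - 2 * z)) as [Hd Hb].
  set (d := rmod (x - 2 * z) 1) in *.
  set (j := (m - 2 * (2 ^ Z.of_nat p * K) - Int_part (x - 2 * z))%Z).
  assert (Hdj : d = 1/6 + u + IZR j).
  { rewrite Hd. unfold j. rewrite !minus_IZR. rewrite Hxz at 1. rewrite minus_IZR. field. }
  assert (Hj : j = 0%Z \/ j = 1%Z). { apply int01; unfold u in *; lra. }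
  destruct (Rlt_dec d (1/3)).
  - destruct Hj as [Hj|Hj]; rewrite Hj in Hdj; simpl in Hdj; unfold u in *; [|lra].
    exists dl. split. apply Rabs_def1; lra. rewrite Hz, Hdj. field.
  - destruct (Rlt_dec d (2/3)).
    + destruct Hj as [Hj|Hj]; rewrite Hj in Hdj; simpl in Hdj; unfold u in *; [|lra].
      exists (2 * e + 1/6). split. apply Rabs_def1; lra. rewrite Hz. field.
    + destruct Hj as [Hj|Hj]; rewrite Hj in Hdj; simpl in Hdj; unfold u in *; [lra|].
      exists (2 * e - 1/6). split. apply Rabs_def1; lra. rewrite Hz. field.
Qed.

Fixpoint chain (psi : R) (xs : list R) : Prop :=
  match xs with
  | nil => True
  | x :: r => near x (2 * psi - 1/6) /\ chain (2 * psi) r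
  end.

Lemma fold_inv xs : forall psi z e K p,
  chain psi xs -> Rabs e < 1/6 ->
  z = psi - 1/6 + e + IZR (2 ^ Z.of_nat p * K) ->
  exists e', Rabs e' < 1/6 /\
    fold_left zstep xs z = 2 ^ length xs * psi - 1/6 + e' + IZR (2 ^ Z.of_nat (p + length xs) * K).
Proof.
  induction xs as [|x r IH]; intros psi z e K p Hc He Hz; simpl.
  - exists e. split; auto. rewrite Nat.add_0_r, Hz. field.
  - destruct Hc as [Hn Hc].
    destruct (zstep_inv psi z x e K p Hn He Hz) as [e1 [He1 Hz1]].
    destruct (IH (2 * psi) (zstep z x) e1 K (S p) Hc He1 Hz1) as [e' [He' Hf]].
    exists e'. split; auto. rewrite Hf. replace (S p + length r)%nat with (p + S (length r))%nat by lia.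
    ring.
Qed.

Definition good N ph (c : nat * nat) :=
  (INR (fst c) / INR N - px ph) ^ 2 < 3/32 /\ (INR (snd c) / INR N - py ph) ^ 2 < 3/32.
Fixpoint allgood N (phs : list R) (cs : list (nat * nat)) : Prop :=
  match phs, cs with
  | nil, nil => True
  | ph :: r, c :: t => good N ph c /\ allgood N r t
  | _, _ => False
  end.

Lemma allgood_len N phs : forall cs, allgood N phs cs -> length cs = length phs.
Proof.
  induction phs as [|ph r IH]; intros [|c t] H; simpl in *; try tauto.
  f_equal. apply IH. tauto.
Qed.

Lemma ag_chain N th n : (0 < N)%nat -> forall s cs, (1 <= s)%nat ->
  allgood N (map (fun k => 2 ^ (k - 1) * th) (seq (S s) n)) cs ->
  chain (2 ^ (s - 1) * th) (map (xval N) cs).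
Proof.
  intros HN. induction n as [|n IH]; intros s cs Hs H.
  - destruct cs; simpl in *; tauto.
  - destruct cs as [|c t]; simpl in H. tauto. destruct H as [[G1 G2] H].
    simpl. rewrite Nat.sub_0_r in G1, G2.
    assert (E : 2 ^ s * th = 2 * (2 ^ (s - 1) * th)).
    { replace s with (S (s - 1)) at 1 by lia. simpl. ring. }
    split.
    + rewrite <- E. apply stage_near; auto.
    + rewrite <- E. replace s with (S s - 1)%nat at 1 by lia. apply IH. lia.
      exact H.
Qed.

Lemma sin_pos_bound x : 0 < x -> - x <= sin x <= x.
Proof.
  intros h. pose proof (sin_lt_x x h). pose proof (SIN_bound x). pose proof PI2_1.
  destruct (Rle_dec 1 x). lra.
  pose proof (sin_gt_0 x h ltac:(lra)). lra.
Qed.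

Lemma sin_abs_le x : Rabs (sin x) <= Rabs x.
Proof.
  destruct (Rtotal_order x 0) as [h|[h|h]].
  - rewrite <- (Ropp_involutive x), sin_neg, !Rabs_Ropp.
    pose proof (sin_pos_bound (- x) ltac:(lra)). apply Rabs_le. rewrite Rabs_left by lra. lra.
  - subst. rewrite sin_0. right; reflexivity.
  - pose proof (sin_pos_bound x h). apply Rabs_le. rewrite Rabs_right by lra. lra.
Qed.

Lemma one_minus_cos y : 1 - cos y <= y ^ 2 / 2.
Proof.
  replace y with (2 * (y / 2)) at 1 by field. rewrite cos_2a_sin.
  pose proof (sin_abs_le (y / 2)).
  assert (sin (y/2) * sin (y/2) <= (y/2) * (y/2)).
  { pose proof (Rsqr_le_abs_1 _ _ H). unfold Rsqr in H0. auto. }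
  nra.
Qed.

Lemma det_bound N l th cs : (0 < N)%nat -> (1 <= l)%nat ->
  allgood N (phases l th) cs -> 1 - fidelity (estimate N l cs) th <= 2 / (2 ^ l) ^ 2.
Proof.
  intros HN Hl H. destruct l as [|l']; [lia|]. clear Hl.
  unfold phases in H. cbn [seq map] in H.
  destruct cs as [|c t]; [simpl in H; tauto|]. destruct H as [[G1 G2] H].
  pose proof (allgood_len _ _ _ H) as Hlen. rewrite length_map, length_seq in Hlen.
  pose proof (ag_chain N th l' HN 1 t (le_n 1) H) as Hch.
  replace (2 ^ (1 - 1) * th) with th in G1, G2, Hch by (simpl; ring).
  destruct (stage_near N th c HN G1 G2) as [dl [m [Hdl Hx]]].
  assert (Hz : xval N c = th - 1/6 + dl + IZR (2 ^ Z.of_nat 0 * m)).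
  { rewrite Hx. simpl Z.of_nat. rewrite Z.pow_0_r, Z.mul_1_l. ring. }
  destruct (fold_inv (map (xval N) t) th (xval N c) dl m 0 Hch Hdl Hz) as [e' [He' Hf]].
  rewrite length_map, Hlen in Hf. simpl (0 + l')%nat in Hf.
  unfold estimate. cbn [map hd tl]. rewrite Hf.
  replace (S l' - 1)%nat with l' by lia.
  set (P := 2 ^ l').
  assert (HP : 0 < P) by (apply pow_lt; lra).
  assert (EK : IZR (2 ^ Z.of_nat l' * m) = P * IZR m).
  { rewrite mult_IZR, <- pow_IZR. reflexivity. }
  rewrite EK.
  set (A := (P * th - 1 / 6 + e' + P * IZR m + 1 / 6) / P).
  destruct (rmod1 A) as [Ha _]. rewrite Ha.
  assert (EA : A = th + e' / P + IZR m) by (unfold A; field; lra).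
  set (y := 2 * PI * (e' / P)).
  assert (Ew : 2 * PI * (th - (A - IZR (Int_part A))) = - y + 2 * PI * IZR (Int_part A - m)).
  { rewrite minus_IZR, EA. unfold y. ring. }
  unfold fidelity. rewrite Ew, cos_per_Z, sin_per_Z, cos_neg, sin_neg.
  pose proof (sin2_cos2 y) as SC. unfold Rsqr in SC.
  pose proof (one_minus_cos y) as OC.
  assert (Hy : y ^ 2 <= 16 * (1/36) / P ^ 2 * 4).
  { unfold y. apply Rabs_def2 in He'. pose proof PI_4. pose proof PI_RGT_0.
    assert (e' ^ 2 <= 1/36) by nra.
    replace ((2 * PI * (e' / P)) ^ 2) with (PI ^ 2 * e' ^ 2 / P ^ 2 * 4) by (field; lra).
    apply Rmult_le_compat_r. lra. unfold Rdiv. apply Rmult_le_compat_r.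
    left; apply Rinv_0_lt_compat; nra.
    apply Rmult_le_compat; nra. }
  replace (2 ^ S l') with (2 * P) by (unfold P; simpl; ring).
  assert (HP2 : 0 < P ^ 2) by nra.
  assert (16 * (1/36) / P ^ 2 * 4 = (16/9) / P ^ 2) by (field; lra).
  assert (2 / (2 * P) ^ 2 = (1/2) / P ^ 2) by (field; lra).
  assert ((16/9) / P ^ 2 <= 4 * ((1/2) / P ^ 2)).
  { unfold Rdiv. rewrite <- Rmult_assoc. apply Rmult_le_compat_r. left; apply Rinv_0_lt_compat; lra. lra. }
  nra.
Qed.

Lemma badx_nn N ph c : 0 <= badx N ph c.
Proof. unfold badx; destruct Rle_dec; lra. Qed.
Lemma bady_nn N ph c : 0 <= bady N ph c.
Proof. unfold bady; destruct Rle_dec; lra. Qed.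

Lemma badsum_nn N phs : forall cs, 0 <= badsum N phs cs.
Proof.
  induction phs as [|ph r IH]; intros [|c t]; simpl; try lra.
  pose proof (badx_nn N ph c). pose proof (bady_nn N ph c). specialize (IH t). lra.
Qed.

Lemma good_or_bad N phs : forall cs, length cs = length phs ->
  allgood N phs cs \/ 1 <= badsum N phs cs.
Proof.
  induction phs as [|ph r IH]; intros [|c t] Hl; simpl in *; try discriminate.
  - left; auto.
  - injection Hl as Hl. pose proof (badx_nn N ph c). pose proof (bady_nn N ph c).
    pose proof (badsum_nn N r t).
    unfold good, badx, bady in *.
    destruct (Rle_dec (3/32) ((INR (fst c) / INR N - px ph) ^ 2)). right; lra.
    destruct (Rle_dec (3/32) ((INR (snd c) / INR N - py ph) ^ 2)). right; lra.
    destruct (IH t Hl). left. split; auto. split; lra. right; lra.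
Qed.

Lemma fid_nn a th : 0 <= fidelity a th.
Proof.
  unfold fidelity. pose proof (pow2_ge_0 (1 + cos (2 * PI * (th - a)))).
  pose proof (pow2_ge_0 (sin (2 * PI * (th - a)))). lra.
Qed.

Lemma fid_bound N l th cs : (0 < N)%nat -> (1 <= l)%nat -> length cs = l ->
  fidelity (estimate N l cs) th >= (1 - 2 / (2 ^ l) ^ 2) + (-1) * badsum N (phases l th) cs.
Proof.
  intros HN Hl Hc.
  assert (length cs = length (phases l th)) by (unfold phases; rewrite length_map, length_seq; auto).
  destruct (good_or_bad N (phases l th) cs H) as [G|B].
  - pose proof (det_bound N l th cs HN Hl G). pose proof (badsum_nn N (phases l th) cs). lra.
  - pose proof (fid_nn (estimate N l cs) th).
    assert (0 < 2 / (2 ^ l) ^ 2). { apply Rdiv_lt_0_compat. lra. apply pow_lt, pow_lt; lra. }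
    lra.
Qed.

Lemma expect_scal N phs : forall f a,
  expect N phs (fun cs => a * f cs) = a * expect N phs f.
Proof.
  induction phs as [|ph rest IH]; intros f a; simpl. reflexivity.
  rewrite scal_sum. apply sum_eq; intros i _.
  match goal with |- _ = ?S * a => rewrite (Rmult_comm S a) end.
  rewrite scal_sum. apply sum_eq; intros j _.
  rewrite IH. ring.
Qed.

Lemma fid_expect l th : (1 <= l)%nat -> (0 < Nsamp l)%nat ->
  1 - expected_fidelity l th <= 2 / (2 ^ l) ^ 2 + INR l * (4 * exp (- (2 * INR (Nsamp l) * (3/32)))).
Proof.
  intros Hl HN. unfold expected_fidelity.
  assert (M : expect (Nsamp l) (phases l th) (fun cs => (1 - 2 / (2 ^ l) ^ 2) + (-1) * badsum (Nsamp l) (phases l th) cs)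
     <= expect (Nsamp l) (phases l th) (fun cs => fidelity (estimate (Nsamp l) l cs) th)).
  { apply expect_mono. intros cs Hc. unfold phases in Hc. rewrite length_map, length_seq in Hc.
    apply Rge_le. apply fid_bound; auto. }
  rewrite expect_add_const in M.
  rewrite (expect_scal _ _ (badsum (Nsamp l) (phases l th))) in M.
  pose proof (expect_badsum (Nsamp l) (phases l th) HN).
  assert (Lp : length (phases l th) = l) by (unfold phases; rewrite length_map, length_seq; auto).
  rewrite Lp in H.
  lra.
Qed.

Lemma ln_le_xm1 x : 0 < x -> ln x <= x - 1.
Proof.
  intros h. destruct (Req_dec (ln x) 0) as [e|e].
  - rewrite e. assert (x = 1). { rewrite <- (exp_ln x h), e, exp_0. reflexivity. } lra.
  - pose proof (exp_ineq1 _ e). rewrite exp_ln in H by auto. lra.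
Qed.

Lemma ln2_bounds : 1/2 < ln 2 < 1.
Proof.
  split.
  - assert (exp (1/2) < 2).
    { assert (exp (1/2) * exp (1/2) = exp 1) by (rewrite <- exp_plus; f_equal; field).
      pose proof exp_le_3. pose proof (exp_pos (1/2)). nra. }
    rewrite <- (ln_exp (1/2)). apply ln_increasing. apply exp_pos. auto.
  - pose proof (exp_ineq1 1 ltac:(lra)). rewrite <- (ln_exp 1). apply ln_increasing; lra.
Qed.

Lemma rceil_bnd x : x <= IZR (rceil x) < x + 1.
Proof.
  unfold rceil. rewrite opp_IZR. pose proof (base_Int_part (- x)). lra.
Qed.

Theorem mainTheorem5 :
  exists C : R, 0 < C /\
    forall (l : nat), (1 <= l)%nat ->
    forall th : R, 0 <= th < 1 ->
      1 - expected_fidelity l th <=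
        C * (ln (INR (nuses l)) / INR (nuses l)) ^ 2.
Proof.
  exists 40000. split. lra. intros l Hl th _.
  assert (Hlr : 1 <= INR l) by (apply (le_INR 1); auto).
  set (Q := 2 ^ l).
  assert (HQ : 2 <= Q). { unfold Q. destruct l. lia. simpl. pose proof (pow_R1_Rle 2 l). lra. }
  set (L := ln (4 * INR l * 2 ^ (2 * l))).
  assert (E2 : 2 ^ (2 * l) = Q ^ 2). { unfold Q. rewrite pow_mult, <- !pow_mult, Nat.mul_comm. reflexivity. }
  assert (HA : 0 < 4 * INR l * 2 ^ (2 * l)) by (rewrite E2; nra).
  assert (HLpos : 0 < L). { unfold L. rewrite <- ln_1. apply ln_increasing. lra. rewrite E2; nra. }
  assert (HLub : L <= 5 * INR l).
  { unfold L. rewrite !ln_mult by (try rewrite E2; nra). rewrite ln_pow by lra.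
    replace 4 with (2 * 2) by ring. rewrite ln_mult by lra.
    pose proof ln2_bounds. pose proof (ln_le_xm1 (INR l) ltac:(lra)). rewrite mult_INR. simpl INR. nra. }
  set (X := 534 / 100 * L).
  pose proof (rceil_bnd X) as Hc.
  assert (HN : INR (Nsamp l) = IZR (rceil X)).
  { unfold Nsamp. fold L X. rewrite INR_IZR_INZ, Z2Nat.id. reflexivity.
    apply le_IZR. unfold X in *. lra. }
  set (N := Nsamp l) in *.
  assert (HNpos : (0 < N)%nat). { apply INR_lt. simpl. unfold X in *. lra. }
  pose proof (fid_expect l th Hl HNpos) as F.
  assert (T2 : INR l * (4 * exp (- (2 * INR N * (3/32)))) <= 1 / Q ^ 2).
  { assert (exp (- (2 * INR N * (3/32))) <= exp (- L)).
    { destruct (Req_dec (- (2 * INR N * (3/32))) (- L)) as [e|e]. rewrite e; lra.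
      left. apply exp_increasing. unfold X in *. lra. }
    rewrite (exp_Ropp L) in H. unfold L in H. rewrite exp_ln in H by auto. rewrite E2 in H.
    assert (0 < Q ^ 2) by nra.
    apply Rle_trans with (INR l * (4 * / (4 * INR l * Q ^ 2))).
    apply Rmult_le_compat_l; lra. right. field. lra. }
  assert (B : 1 - expected_fidelity l th <= 3 / Q ^ 2).
  { fold Q N in F. assert (2 / Q ^ 2 + 1 / Q ^ 2 = 3 / Q ^ 2) by (field; lra). lra. }
  assert (Hn : INR (nuses l) = 2 * INR N * (Q - 1)).
  { unfold nuses. fold N. rewrite !mult_INR, minus_INR, pow_INR. replace (INR 2) with 2 by (simpl; ring). fold Q. simpl INR. ring.
    apply (INR_le 1). rewrite pow_INR. replace (INR 2) with 2 by (simpl; ring). fold Q. simpl. lra. }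
  assert (HN1 : 1 <= INR N) by (apply (le_INR 1); lia).
  assert (HNub : INR N <= 28 * INR l) by (unfold X in *; lra).
  set (n := INR (nuses l)) in *.
  assert (Hn1 : Q <= n) by nra.
  assert (Hn2 : n <= 56 * INR l * Q) by nra.
  assert (Hln : INR l / 2 <= ln n).
  { apply Rle_trans with (ln Q). unfold Q. rewrite ln_pow by lra. pose proof ln2_bounds. nra.
    destruct (Req_dec Q n) as [e|e]. rewrite e; lra. left; apply ln_increasing; lra. }
  assert (R1 : 1 / (112 * Q) <= ln n / n).
  { apply Rle_trans with ((INR l / 2) / (56 * INR l * Q)).
    right. field. lra.
    unfold Rdiv. apply Rmult_le_compat. lra. left; apply Rinv_0_lt_compat; nra. auto.
    apply Rinv_le_contravar; nra. }
  assert (R2 : (1 / (112 * Q)) ^ 2 <= (ln n / n) ^ 2).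
  { apply pow_incr. split; auto. left. apply Rdiv_lt_0_compat; lra. }
  apply Rle_trans with (3 / Q ^ 2). auto.
  apply Rle_trans with (40000 * (1 / (112 * Q)) ^ 2).
  replace (40000 * (1/(112*Q))^2) with ((40000/12544)/Q^2) by (field; lra).
  unfold Rdiv; apply Rmult_le_compat_r; [left; apply Rinv_0_lt_compat; nra| lra].
  apply Rmult_le_compat_l; lra.
Qed.
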